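(* Let $T$ be a tree and $\mathfrak p=(R\overset{d}{\twoheadleftarrow}S\overset{j}{\hookrightarrow}T)\in\mathfrak P_T$. The map $\mathfrak P_R\to\mathfrak P_T(\ge\mathfrak p)$, $\mathfrak q\mapsto\mathfrak q\circ\mathfrak p$, is an isomorphism of posets, where $\mathfrak P_T(\ge\mathfrak p)=\{\mathfrak q\in\mathfrak P_T:\mathfrak q\ge\mathfrak p\}$ with the induced order.
   Context: A tree is a nonempty finite connected acyclic graph with vertex set $V(T)$ and edge set $E(T)$. Subgraphs are full (vertex-induced); a subtree is a subgraph which is a tree. A quotient tree $S\twoheadrightarrow R$ is a tree $R$ with a surjection $V(S)\to V(R)$ whose fibers are vertex sets of subtrees, vertices of $R$ adjacent iff an edge of $S$ joins their fibers. Poset $\mathfrak P_T$: elements are correspondences $(R\overset{q}{\twoheadleftarrow}S\overset{i}{\hookrightarrow}T)$ with $i$ inclusion of a subtree and $q$ a quotient of trees (equivalently, a subtree $S$ of $T$ with a partition of $S$ into subtrees, the fibers of $q$; correspondences differing by an isomorphism of the quotient tree compatible with the maps are identified). Composition: for $\mathfrak q=(P\twoheadleftarrow Q\hookrightarrow R)$ and $\mathfrak p=(R\twoheadleftarrow S\hookrightarrow T)$, $\mathfrak q\circ\mathfrak p=(P\twoheadleftarrow Q\times_RS\hookrightarrow T)$ where $Q\times_RS$ is the subtree of $S$ on the vertices mapping into $Q$, included into $T$ via $S$ and mapped onto $P$ via $Q$. Order: $\mathfrak p\ge\mathfrak p'$ iff $\mathfrak p=\mathfrak q\circ\mathfrak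 p'$ for some such correspondence $\mathfrak q$. *)

(* Defs.v *)
From mathcomp Require Import all_boot.
Set Implicit Arguments. Unset Strict Implicit. Unset Printing Implicit Defensive.

(* x and y are joined by an e-walk staying inside A (x itself assumed in A) *)
Definition conn_in (V : finType) (e : rel V) (A : {set V}) (x y : V) : Prop :=
  exists s : seq V, [/\ path e x s, all (fun z => z \in A) s & last x s = y].

Definition has_cycle_in (V : finType) (e : rel V) (A : {set V}) : Prop :=
  exists (x : V) (s : seq V),
    [/\ x \in A /\ all (fun z => z \in A) s, 2 <= size s, uniq (x :: s),
        path e x s & e (last x s) x].

Definition tree_on (V : finType) (e : rel V) (A : {set V}) : Prop :=
  [/\ A != set0,
      (forall x y, x \in A -> y \in A -> conn_in e A x y)
    & ~ has_cycle_in e A].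

Definition is_tree (V : finType) (e : rel V) : Prop :=
  [/\ symmetric e, irreflexive e & tree_on e [set: V]].

Definition qrel (V : finType) (e : rel V) : rel {set V} :=
  fun B C => (B != C) && [exists x in B, exists y in C, e x y].

(* A correspondence R <<- S ->> T is encoded (canonically, up to the
   identification by isomorphisms of R) by the pair (S, fibers of q). *)
Definition corr (V : finType) := ({set V} * {set {set V}})%type.

Definition is_corr (V : finType) (e : rel V) (p : corr V) : Prop :=
  [/\ tree_on e p.1,
      partition p.2 p.1,
      (forall B, B \in p.2 -> tree_on e B)
    & tree_on (qrel e) p.2].

(* vertex type of the quotient tree R of p *)
Definition blk (V : finType) (p : corr V) := {B : {set V} | B \in p.2}.

Definition brel (V : finType) (e : rel V) (p : corr V) : rel (blk p) :=
  fun B C => qrel e (val B) (val C).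

Arguments brel {V} e p.

Definition corr_comp {V : finType} (p : corr V) (q : corr (blk p)) : corr V :=
  (\bigcup_(B in q.1) val B,
   [set (\bigcup_(B in C) val B) | C : {set blk p} in q.2]).

Arguments corr_comp {V} p q.

Definition ge_corr (V : finType) (e : rel V) (p p' : corr V) : Prop :=
  exists q : corr (blk p'), is_corr (brel e p') q /\ corr_comp p' q = p.

(* Main.v *)
Require Import Defs.
From mathcomp Require Import all_boot.
Set Implicit Arguments. Unset Strict Implicit. Unset Printing Implicit Defensive.

Lemma disjointP (T : finType) (A B : {set T}) :
  [disjoint A & B] -> forall x, x \in A -> x \in B -> False.
Proof. by move=> d x Ha Hb; rewrite (disjointFr d Ha) in Hb. Qed.

Section Conn.
Variables (V : finType) (e : rel V).

Lemma conn_trans (A : {set V}) x y z :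
  conn_in e A x y -> conn_in e A y z -> conn_in e A x z.
Proof.
move=> [s [p1 a1 l1]] [t [p2 a2 l2]]; exists (s ++ t); split.
- by rewrite cat_path p1 l1 p2.
- by rewrite all_cat a1 a2.
- by rewrite last_cat l1.
Qed.

Lemma conn_edge (A : {set V}) x y : y \in A -> e x y -> conn_in e A x y.
Proof. by move=> Hy Hxy; exists [:: y]; split; rewrite /= ?Hy ?Hxy. Qed.

Lemma conn_sub (A B : {set V}) x y :
  A \subset B -> conn_in e A x y -> conn_in e B x y.
Proof.
move=> sAB [s [Hp Ha Hl]]; exists s; split => //.
by apply: sub_all Ha => z; apply: (subsetP sAB).
Qed.

Lemma sub_acyclic (A B : {set V}) :
  A \subset B -> ~ has_cycle_in e B -> ~ has_cycle_in e A.
Proof.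
move=> sAB nB [x [s [[Hx Hs] Hsz Hu Hp He]]]; apply: nB; exists x, s; split => //.
split; first exact: (subsetP sAB).
by apply: sub_all Hs => z; apply: (subsetP sAB).
Qed.
End Conn.

Section Gen.
Variables (U W : finType) (eU : rel U) (eW : rel W) (f : U -> W).

Lemma lift_seq (A : {set U}) (s' : seq W) :
  all (fun z => z \in f @: A) s' ->
  exists s, all (fun z => z \in A) s /\ map f s = s'.
Proof.
elim: s' => [|y s' IH] /=; first by exists [::].
case/andP => /imsetP [a Ha ->] /IH [s [Hs <-]].
by exists (a :: s); rewrite /= Ha Hs.
Qed.

Variable (A : {set U}).
Hypothesis finj : {in A &, injective f}.
Hypothesis frel : {in A &, forall a b, eW (f a) (f b) = eU a b}.

Lemma path_mapA x s : x \in A -> all (fun z => z \in A) s ->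
  path eW (f x) (map f s) = path eU x s.
Proof.
elim: s x => [|y s IH] x //= Hx /andP [Hy Hs].
by rewrite frel // IH.
Qed.

Lemma conn_map x y : x \in A -> conn_in eU A x y ->
  conn_in eW (f @: A) (f x) (f y).
Proof.
move=> Hx [s [Hp Ha Hl]]; exists (map f s); split.
- by rewrite path_mapA.
- by apply/allP => z /mapP [a /(allP Ha) Ha' ->]; apply: imset_f.
- by rewrite last_map Hl.
Qed.

Lemma cycle_lift : has_cycle_in eW (f @: A) -> has_cycle_in eU A.
Proof.
case=> x' [s' [[/imsetP [x Hx ->] Hs'] Hsz Hu Hp He]].
case: (lift_seq Hs') => s [Hs Hm]; subst s'.
have HA : all (fun z => z \in A) (x :: s) by rewrite /= Hx.
exists x, s; split.
- by [].
- by rewrite size_map in Hsz.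
- rewrite -(map_inj_in_uniq (f:=f)) //.
  by move=> a b /(allP HA) Ha /(allP HA) Hb; apply: finj.
- by rewrite -path_mapA.
- rewrite last_map in He; rewrite -frel //.
  exact: (allP HA) _ (mem_last _ _).
Qed.

Lemma tree_map : tree_on eU A -> tree_on eW (f @: A).
Proof.
case=> [HA Hc Hnc]; split.
- by rewrite imset_eq0.
- move=> x' y' /imsetP [x Hx ->] /imsetP [y Hy ->].
  exact: conn_map (Hc _ _ Hx Hy).
- by move/cycle_lift.
Qed.
End Gen.

Section Iso.
Variables (U W : finType) (eU : rel U) (eW : rel W) (f : U -> W).
Hypothesis finj : injective f.
Hypothesis frel : forall a b, eW (f a) (f b) = eU a b.

Definition imcorr (r : corr U) : corr W := (f @: r.1, [set f @: Z | Z : {set U} in r.2]).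

Lemma imcorr_is r : is_corr eU r -> is_corr eW (imcorr r).
Proof.
case=> [Ht Hpart Hfib Hq]; split.
- by apply: tree_map Ht => // a b _ _; apply: finj.
- case/and3P: Hpart => /eqP cQ tQ n0.
  apply/and3P; split.
  + apply/eqP; rewrite /= -cQ /cover; apply/setP => x.
    apply/bigcupP/imsetP.
    * case=> _ /imsetP [Y HY ->] /imsetP [a Ha ->]; exists a => //.
      by apply/bigcupP; exists Y.
    * case=> a /bigcupP [Y HY Ha] ->; exists (f @: Y); first exact: imset_f.
      exact: imset_f.
  + apply/trivIsetP => _ _ /imsetP [Y HY ->] /imsetP [Z HZ ->] Hne.
    have HYZ : Y != Z by apply: contraNneq Hne => ->.
    have dYZ := trivIsetP tQ _ _ HY HZ HYZ.
    rewrite -setI_eq0; apply/set0Pn => -[x /setIP [Hx1 Hx2]]; move: Hx1 Hx2 =>  /imsetP [a Ha ->] /imsetP [b Hb /finj E]; subst b.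
    exact: (@disjointP _ _ _ dYZ) a Ha Hb.
  + apply/negP => /imsetP [Y HY E].
    have E' : Y = set0 by apply/eqP; rewrite -(imset_eq0 f) -E.
    by move: n0; rewrite -E' HY.
- move=> _ /imsetP [Z HZ ->]; apply: tree_map (Hfib _ HZ) => // a b _ _.
  exact: finj.
- apply: tree_map Hq => //.
  + by move=> a b _ _; apply: imset_inj.
  + move=> Y Z _ _; rewrite /qrel (inj_eq (imset_inj finj)); congr (_ && _).
    apply/existsP/existsP.
    * case=> _ /andP [/imsetP [a Ha ->] /existsP [_ /andP [/imsetP [b Hb ->] Hab]]].
      exists a; rewrite Ha /=; apply/existsP; exists b; rewrite Hb /=.
      by rewrite -frel.
    * case=> a /andP [Ha /existsP [b /andP [Hb Hab]]].
      exists (f a); rewrite imset_f //=; apply/existsP; exists (f b).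
      by rewrite imset_f //= frel.
Qed.
End Iso.

Section Blocks.
Variables (V : finType) (e : rel V) (p : corr V).
Hypothesis Hpart : partition p.2 p.1.

Definition Ub (X : {set blk p}) : {set V} := \bigcup_(B in X) val B.

Lemma blk_ne0 (B : blk p) : exists x, x \in val B.
Proof.
case/and3P: Hpart => _ _ H0.
case: (set_0Vmem (val B)) => [E|[x Hx]]; last by exists x.
by move: H0; rewrite -E (valP B).
Qed.

Lemma blk_disj (B C : blk p) x : x \in val B -> x \in val C -> B = C.
Proof.
case/and3P: Hpart => _ tP _ Hx Hx'.
apply: val_inj; apply/eqP; apply/negPn/negP => Hne.
have := trivIsetP tP _ _ (valP B) (valP C) Hne.
by move/disjointP/(_ x Hx Hx').
Qed.

Lemma Ub_sub X Y : Ub X \subset Ub Y -> X \subset Y.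
Proof.
move=> sXY; apply/subsetP => B HB; case: (blk_ne0 B) => x Hx.
have /bigcupP [B' HB' Hx'] : x \in Ub Y.
  by apply: (subsetP sXY); apply/bigcupP; exists B.
by rewrite (blk_disj Hx Hx').
Qed.

Lemma Ub_inj : injective Ub.
Proof.
move=> X Y E; apply/eqP; rewrite eqEsubset; apply/andP; split; apply: Ub_sub;
  by rewrite E.
Qed.

Hypothesis Hblk : forall B, B \in p.2 -> tree_on e B.
Hypothesis Hacyc : ~ has_cycle_in e [set: V].

Lemma Ub_tree X : tree_on (brel e p) X -> tree_on e (Ub X).
Proof.
case=> [HX Hc _]; split.
- case/set0Pn: HX => B HB; case: (blk_ne0 B) => x Hx.
  by apply/set0Pn; exists x; apply/bigcupP; exists B.
- move=> x y /bigcupP [B HB Hx] /bigcupP [C HC Hy].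
  case: (Hc _ _ HB HC) => s [Hp Ha Hl].
  elim: s B HB x Hx Hp Ha Hl => [|D s IH] B HB x Hx /= Hp Ha Hl.
  + subst C; have [_ Hct _] := Hblk (valP B).
    apply: conn_sub (Hct _ _ Hx Hy).
    by apply/subsetP => z Hz; apply/bigcupP; exists B.
  + case/andP: Hp => HBD Hp; case/andP: Ha => HD Ha.
    move: HBD; rewrite /brel /qrel.
    case/andP => _ /existsP [a /andP [Ha' /existsP [b /andP [Hb Hab]]]].
    have [_ Hct _] := Hblk (valP B).
    apply: conn_trans (conn_sub _ (Hct _ _ Hx Ha')) _.
      by apply/subsetP => z Hz; apply/bigcupP; exists B.
    apply: conn_trans (conn_edge _ Hab) _.
      by apply/bigcupP; exists D.
    exact: (IH D HD b Hb Hp Ha Hl).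
- by apply: sub_acyclic Hacyc; exact: subsetT.
Qed.

Lemma Ub_part Q X : partition Q X -> partition (Ub @: Q) (Ub X).
Proof.
case/and3P => /eqP cQ tQ n0.
apply/and3P; split.
- apply/eqP/setP => x; rewrite -cQ /cover.
  apply/bigcupP/bigcupP.
  + case=> _ /imsetP [Y HY ->] /bigcupP [B HB Hx]; exists B => //.
    by apply/bigcupP; exists Y.
  + case=> B /bigcupP [Y HY HB] Hx; exists (Ub Y); first exact: imset_f.
    by apply/bigcupP; exists B.
- apply/trivIsetP => _ _ /imsetP [Y HY ->] /imsetP [Z HZ ->] Hne.
  have HYZ : Y != Z by apply: contraNneq Hne => ->.
  have dYZ := trivIsetP tQ _ _ HY HZ HYZ.
  rewrite -setI_eq0; apply/set0Pn => -[x /setIP [Hx1 Hx2]]; move: Hx1 Hx2 =>  /bigcupP [B HB Hx] /bigcupP [C HC Hx'].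
  rewrite (blk_disj Hx Hx') in HB; exact: (@disjointP _ _ _ dYZ) C HB HC.
- apply/negP => /imsetP [Y HY E].
  have HY0 : Y = set0 by apply: Ub_inj; rewrite -E /Ub big_set0.
  by move: n0; rewrite -HY0 HY.
Qed.

Lemma Ub_qrel Q : trivIset Q ->
  {in Q &, forall X Y, qrel e (Ub X) (Ub Y) = qrel (brel e p) X Y}.
Proof.
move=> tQ X Y HX HY; rewrite /qrel (inj_eq Ub_inj).
have [->|Hne] := eqVneq X Y; first by rewrite ?eqxx.
rewrite ?Hne /=.
have dXY := trivIsetP tQ _ _ HX HY Hne.
apply/existsP/existsP.
- case=> x /andP [/bigcupP [B HB Hx] /existsP [y /andP [/bigcupP [C HC Hy] Hxy]]].
  exists B; rewrite HB /=; apply/existsP; exists C; rewrite HC /=.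
  rewrite /brel /qrel; apply/andP; split.
  + apply/negP => /eqP /val_inj E; subst C.
    exact: (@disjointP _ _ _ dXY) B HB HC.
  + apply/existsP; exists x; rewrite Hx /=; apply/existsP; exists y.
    by rewrite Hy.
- case=> B /andP [HB /existsP [C /andP [HC HBC]]].
  move: HBC; rewrite /brel /qrel.
  case/andP => _ /existsP [x /andP [Hx /existsP [y /andP [Hy Hxy]]]].
  exists x; apply/andP; split; first by apply/bigcupP; exists B.
  by apply/existsP; exists y; rewrite Hxy andbT; apply/bigcupP; exists C.
Qed.

Lemma compE (q : corr (blk p)) : corr_comp p q = (Ub q.1, Ub @: q.2).
Proof. by []. Qed.

Lemma comp_is q : is_corr (brel e p) q -> is_corr e (corr_comp p q).
Proof.
case=> [Ht Hqp Hfib Hq]; rewrite compE; split => /=.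
- exact: Ub_tree.
- exact: Ub_part.
- by move=> _ /imsetP [Y HY ->]; apply: Ub_tree; apply: Hfib.
- case/and3P: Hqp => _ tQ _.
  apply: tree_map Hq; first by move=> a b _ _; apply: Ub_inj.
  exact: Ub_qrel.
Qed.

Lemma comp_inj q1 q2 : corr_comp p q1 = corr_comp p q2 -> q1 = q2.
Proof.
rewrite !compE; case: q1 q2 => [a1 b1] [a2 b2] /= [E1 E2].
by rewrite (Ub_inj E1) (imset_inj Ub_inj E2).
Qed.

Section Ord.
Variable q' : corr (blk p).
Hypothesis tq : trivIset q'.2.

Definition phi (C : blk q') : blk (corr_comp p q') :=
  exist _ (Ub (val C)) (imset_f Ub (valP C)).

Lemma phi_inj : injective phi.
Proof. by move=> C D /(congr1 val) /Ub_inj /val_inj. Qed.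

Lemma phi_rel C D :
  brel e (corr_comp p q') (phi C) (phi D) = brel (brel e p) q' C D.
Proof. exact: Ub_qrel (valP C) (valP D). Qed.

Lemma phi_surj (D : blk (corr_comp p q')) : exists C, phi C == D.
Proof.
move: (valP D) => /imsetP [X HX E]; exists (exist _ X HX).
by apply/eqP; apply: val_inj; rewrite /= E.
Qed.

Definition psi D := xchoose (phi_surj D).

Lemma psiK : cancel psi phi.
Proof. by move=> D; apply/eqP; exact: xchooseP (phi_surj D). Qed.

Lemma psi_inj : injective psi.
Proof. exact: can_inj psiK. Qed.

Lemma psi_rel D D' :
  brel (brel e p) q' (psi D) (psi D') = brel e (corr_comp p q') D D'.
Proof. by rewrite -phi_rel !psiK. Qed.

Lemma Ubphi (Z : {set blk q'}) :
  \bigcup_(D in phi @: Z) val D = Ub (\bigcup_(C in Z) val C).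
Proof.
apply/setP => x; apply/bigcupP/bigcupP.
- case=> _ /imsetP [C HC ->] /bigcupP [B HB Hx]; exists B => //.
  by apply/bigcupP; exists C.
- case=> B /bigcupP [C HC HB] Hx; exists (phi C); first exact: imset_f.
  by apply/bigcupP; exists B.
Qed.

Lemma comp_phi r :
  corr_comp (corr_comp p q') (imcorr phi r) = corr_comp p (corr_comp q' r).
Proof.
rewrite /corr_comp /imcorr /=; congr (_, _); first exact: Ubphi.
rewrite -!imset_comp; apply: eq_imset => Z /=; exact: Ubphi.
Qed.

Lemma imset_phipsi (Z : {set blk (corr_comp p q')}) : phi @: (psi @: Z) = Z.
Proof.
by rewrite -imset_comp (eq_imset _ psiK) imset_id.
Qed.

Lemma ord_equiv q :
  ge_corr (brel e p) q q' <-> ge_corr e (corr_comp p q) (corr_comp p q').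
Proof.
split.
- case=> r [Hr Hc]; exists (imcorr phi r); split.
  + exact: imcorr_is phi_inj phi_rel _ Hr.
  + by rewrite comp_phi Hc.
- case=> r' [Hr' Hc']; exists (imcorr psi r'); split.
  + exact: imcorr_is psi_inj psi_rel _ Hr'.
  + apply: comp_inj; rewrite -comp_phi -Hc'; congr corr_comp.
    rewrite /imcorr /= imset_phipsi -imset_comp.
    rewrite (eq_imset _ imset_phipsi) imset_id.
    by case: r' {Hr' Hc'}.
Qed.
End Ord.
End Blocks.

Theorem lemma2p22 (V : finType) (e : rel V) (p : corr V) :
  is_tree e -> is_corr e p ->
  (* q |-> q o p maps P_R into P_T(>= p) *)
  (forall q : corr (blk p), is_corr (brel e p) q ->
     is_corr e (corr_comp p q) /\ ge_corr e (corr_comp p q) p) /\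
  (* it is injective *)
  (forall q q' : corr (blk p), is_corr (brel e p) q -> is_corr (brel e p) q' ->
     corr_comp p q = corr_comp p q' -> q = q') /\
  (* it is surjective onto P_T(>= p) *)
  (forall x : corr V, is_corr e x -> ge_corr e x p ->
     exists q : corr (blk p), is_corr (brel e p) q /\ corr_comp p q = x) /\
  (* it preserves and reflects the order *)
  (forall q q' : corr (blk p), is_corr (brel e p) q -> is_corr (brel e p) q' ->
     (ge_corr (brel e p) q q' <-> ge_corr e (corr_comp p q) (corr_comp p q'))).
Proof.
move=> [_ _ [_ _ Hacyc]] [HS Hpart Hblk Hquot].
split; [|split; [|split]].
- move=> q Hq; split; first exact: comp_is.
  by exists q.
- by move=> q q' _ _; apply: comp_inj.
- by move=> x _ [q [Hq E]]; exists q.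
- move=> q q' _ [_ Hq' _ _]; case/and3P: Hq' => _ tq _.
  exact: ord_equiv.
Qed.
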